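(* Let $\mathcal{H}$ be a real Hilbert space and $\mathsf{T}:\mathcal{H}\to2^{\mathcal{H}}$ a set-valued operator. The following are equivalent: (1) $\mathsf{T}=\partial\psi$ for some $\psi\in\Gamma_0(\mathcal{H})$; (2) $\mathsf{T}=\mathbf{Prox}_{\phi}$ for some $\phi:\mathcal{H}\to(-\infty,+\infty]$ with $\phi+\tfrac12\|\cdot\|^2\in\Gamma_0(\mathcal{H})$. Moreover, if these statements hold, then $\phi=\psi^*-\tfrac12\|\cdot\|^2$ (equivalently, $\psi=(\phi+\tfrac12\|\cdot\|^2)^*$).
   Context: $\Gamma_0(\mathcal{H})$ is the set of proper lower semicontinuous convex functions $\mathcal{H}\to(-\infty,+\infty]$. $\partial$ denotes the subdifferential $\partial g(x)=\{z:\langle y-x,z\rangle+g(x)\le g(y)\ \forall y\}$; $\psi^*$ is the Fenchel conjugate $\psi^*(u)=\sup_x(\langle x,u\rangle-\psi(x))$. For proper $\phi$, $\mathbf{Prox}_{\phi}(x)=\operatorname{argmin}_{y}\big(\phi(y)+\frac12\|x-y\|^2\big)$ (set-valued). *)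

(* Defs.v *)
From HB Require Import structures.
From mathcomp Require Import all_boot all_order all_algebra.
From mathcomp Require Import all_classical all_reals all_analysis.
Set Implicit Arguments. Unset Strict Implicit. Unset Printing Implicit Defensive.
Import Order.TTheory GRing.Theory Num.Theory.
Import numFieldNormedType.Exports.
Local Open Scope classical_set_scope.
Local Open Scope ring_scope.

Section ConvexAnalysis.
Context {R : realType} {H : normedModType R}.

(* [ip] is a (real) inner product on H inducing the norm of H.
   Together with completeness of H this makes H a real Hilbert space. *)
Definition is_inner_product (ip : H -> H -> R) : Prop :=
  [/\ (forall x y, ip x y = ip y x),
      (forall (a : R) (x y z : H), ip (a *: x + y) z = a * ip x z + ip y z)
    & (forall x, `|x| ^+ 2 = ip x x)].

Local Open Scope ereal_scope.

Definition proper_fun (f : H -> \bar R) : Prop :=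
  (forall x, f x != -oo) /\ (exists x, f x \is a fin_num).

(* convexity of an extended-real valued function never equal to -oo *)
Definition convex_fun (f : H -> \bar R) : Prop :=
  forall (x y : H) (t : R), (0 < t < 1)%R ->
    f (t *: x + (1 - t) *: y)%R <= t%:E * f x + (1 - t)%:E * f y.

Definition Gamma0 (f : H -> \bar R) : Prop :=
  [/\ proper_fun f, convex_fun f & lower_semicontinuous f].

Definition subdiff (ip : H -> H -> R) (g : H -> \bar R) (x : H) : set H :=
  [set z | forall y, (ip (y - x)%R z)%:E + g x <= g y].

Definition fconj (ip : H -> H -> R) (psi : H -> \bar R) (u : H) : \bar R :=
  ereal_sup (range (fun x => (ip x u)%:E - psi x)).

Definition halfsq (x : H) : \bar R := (2^-1 * `|x| ^+ 2)%R%:E.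

Definition Prox (phi : H -> \bar R) (x : H) : set H :=
  [set y | forall z, phi y + halfsq (x - y)%R <= phi z + halfsq (x - z)%R].

End ConvexAnalysis.

(* Main.v *)
Require Import Defs.
From HB Require Import structures.
From mathcomp Require Import all_boot all_order all_algebra.
From mathcomp Require Import all_classical all_reals all_analysis.
From mathcomp Require Import ring lra.
Import Order.TTheory GRing.Theory Num.Theory.
Import numFieldNormedType.Exports.
Local Open Scope classical_set_scope.
Local Open Scope ring_scope.

Set Implicit Arguments. Unset Strict Implicit. Unset Printing Implicit Defensive.

Section Basics.
Variables (R : realType) (H : completeNormedModType R) (ip : H -> H -> R).
Hypothesis hip : is_inner_product ip.

Lemma ipC x y : ip x y = ip y x.
Proof. by case: hip. Qed.
Lemma ipxx x : ip x x = `|x| ^+ 2.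
Proof. by case: hip. Qed.
Lemma ip_lin a x y z : ip (a *: x + y) z = a * ip x z + ip y z.
Proof. by case: hip. Qed.
Lemma ip0l z : ip 0 z = 0.
Proof.
have := ip_lin 1 0 0 z; rewrite scale1r addr0 mul1r; lra.
Qed.
Lemma ipDl x y z : ip (x + y) z = ip x z + ip y z.
Proof. by rewrite -[x in LHS]scale1r ip_lin mul1r. Qed.
Lemma ipZl a x z : ip (a *: x) z = a * ip x z.
Proof. by rewrite -[a *: x]addr0 ip_lin ip0l addr0. Qed.
Lemma ipNl x z : ip (- x) z = - ip x z.
Proof. by rewrite -scaleN1r ipZl mulN1r. Qed.
Lemma ipBl x y z : ip (x - y) z = ip x z - ip y z.
Proof. by rewrite ipDl ipNl. Qed.
Lemma ipDr x y z : ip z (x + y) = ip z x + ip z y.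
Proof. by rewrite ipC ipDl !(ipC z). Qed.
Lemma ipZr a x z : ip z (a *: x) = a * ip z x.
Proof. by rewrite ipC ipZl ipC. Qed.
Lemma ipNr x z : ip z (- x) = - ip z x.
Proof. by rewrite ipC ipNl ipC. Qed.
Lemma ipBr x y z : ip z (x - y) = ip z x - ip z y.
Proof. by rewrite ipDr ipNr. Qed.
Lemma ip0r z : ip z 0 = 0.
Proof. by rewrite ipC ip0l. Qed.

Lemma normD2 x y : `|x + y| ^+ 2 = `|x| ^+ 2 + 2 * ip x y + `|y| ^+ 2.
Proof. rewrite -!ipxx ipDl !ipDr (ipC y x); ring. Qed.
Lemma normB2 x y : `|x - y| ^+ 2 = `|x| ^+ 2 - 2 * ip x y + `|y| ^+ 2.
Proof. rewrite -!ipxx ipBl !ipBr (ipC y x); ring. Qed.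

Lemma CS x y : `|ip x y| <= `|x| * `|y|.
Proof.
have key : ip x y ^+ 2 <= (`|x| * `|y|) ^+ 2.
  have [x0|xn0] := eqVneq x 0.
    by rewrite x0 ip0l normr0 mul0r expr0n /=.
  have bpos : 0 < `|x| ^+ 2 by rewrite exprn_gt0 // normr_gt0.
  pose t := - ip x y / `|x| ^+ 2.
  have e : t * `|x| ^+ 2 = - ip x y by rewrite /t mulfVK // gt_eqF.
  have h : 0 <= t ^+ 2 * `|x| ^+ 2 + 2 * (t * ip x y) + `|y| ^+ 2.
    have := normD2 (t *: x) y; rewrite normrZ ipZl exprMn real_normK ?num_real // => <-.
    by rewrite exprn_ge0.
  have := mulr_ge0 (ltW bpos) h.
  have -> : `|x| ^+ 2 * (t ^+ 2 * `|x| ^+ 2 + 2 * (t * ip x y) + `|y| ^+ 2)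
     = (t * `|x| ^+ 2) ^+ 2 + 2 * (t * `|x| ^+ 2) * ip x y + `|x| ^+ 2 * `|y| ^+ 2 by ring.
  rewrite e exprMn; nra.
rewrite -(ler_pXn2r (_ : (0 < 2)%N)) ?nnegrE ?mulr_ge0 //.
by rewrite real_normK ?num_real.
Qed.

End Basics.

Unset Implicit Arguments.

Lemma natSinv_small (R : realType) (e : R) : (0 < e)%R -> exists N, forall n, (N <= n)%N -> (n.+1%:R^-1 < e)%R.
Proof.
move=> e0; exists (Num.truncn e^-1) => n hn.
by rewrite invf_plt ?unfold_in //= ?ltr0n // -truncn_le_nat.
Qed.
Arguments natSinv_small {R e}.

Lemma small_le (R : realType) (G K : R) : 0 <= K ->
  (forall t, 0 < t < 1 -> 2 * t * G <= t ^+ 2 * K) -> G <= 0.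
Proof.
move=> K0 h; rewrite leNgt; apply/negP => G0.
have q0 : 0 < G + K + 1 by lra.
pose t := G / (G + K + 1).
have tq : t * (G + K + 1) = G by rewrite /t mulfVK // gt_eqF.
have t0 : 0 < t by rewrite /t divr_gt0.
have t1 : t < 1 by rewrite /t ltr_pdivrMr // mul1r; lra.
have := h t; rewrite t0 t1 => /(_ isT) ht.
have e2 : t ^+ 2 * (G + K + 1) = t * G by rewrite expr2 -mulrA tq.
have p1 := mulr_gt0 t0 G0.
have p2 := mulr_gt0 (mulr_gt0 t0 t0) G0.
have p3 := mulr_gt0 t0 t0.
rewrite -expr2 in p2 p3.
lra.
Qed.

Section Vec.
Variables (R : realType) (H : completeNormedModType R).
Lemma mid_id (x y z : H) : (2^-1 : R) *: (x - y) + (2^-1 : R) *: (x - z) = x - ((2^-1 : R) *: y + (2^-1 : R) *: z).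
Proof.
rewrite !scalerBr opprD addrACA -scalerDl.
have -> : (2^-1 + 2^-1 : R) = 1 by field.
by rewrite scale1r.
Qed.
Lemma seg_id (x0 x xq : H) (t : R) : x0 - (t *: x + (1 - t) *: xq) = (x0 - xq) - t *: (x - xq).
Proof.
rewrite scalerBl scale1r scalerBr opprB opprD opprB !addrA addrAC [RHS]addrAC; congr (_ + _); exact: addrAC.
Qed.

Lemma cauchy_seq_cvg (u : nat -> H) :
  (forall n m, `|u n - u m| ^+ 2 <= 2 * n.+1%:R^-1 + 2 * m.+1%:R^-1) -> cvg (u @ \oo).
Proof.
move=> hu; apply/cauchy_cvgP; apply: cauchy_exP => eps eps0.
have e2 : 0 < eps ^+ 2 / 4 by rewrite divr_gt0 ?exprn_gt0.
have [N hN] := natSinv_small e2.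
exists (u N); exists N => // n /= hn.
rewrite -ball_normE /=.
have h1 := hN N (leqnn N); have h2 := hN n hn.
have := hu N n.
move=> h; rewrite -(ltr_pXn2r (_ : (0 < 2)%N)) ?nnegrE ?(ltW eps0) //.
move: h1 h2 h; move: (N.+1%:R^-1) (n.+1%:R^-1) => a b; lra.
Qed.
End Vec.

Section Proj.
Variables (R : realType) (H : completeNormedModType R) (ip : H -> H -> R).
Hypothesis hip : is_inner_product ip.

Lemma parallelogram (a b : H) :
  `|a - b| ^+ 2 = 2 * `|a| ^+ 2 + 2 * `|b| ^+ 2 - 4 * `|(2^-1 : R) *: a + (2^-1 : R) *: b| ^+ 2.
Proof.
rewrite (normB2 hip) (normD2 hip) !normrZ (ipZl hip) (ipZr hip) !exprMn ger0_norm ?invr_ge0 ?ler0n //.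
by field.
Qed.

Lemma proj (f : H -> \bar R) : Gamma0 f -> forall (x0 : H) (al : R),
  exists xq sq, (f xq <= sq%:E)%E /\ forall x s, (f x <= s%:E)%E ->
     ip (x0 - xq) (x - xq) <= (sq - al) * (s - sq).
Proof.
move=> [[fN [x1 fx1]] fconv flsc] x0 al.
pose D x s := `|x0 - x| ^+ 2 + (s - al) ^+ 2.
pose S := [set r | exists x s, (f x <= s%:E)%E /\ r = D x s].
have S0 : S !=set0.
  by exists (D x1 (fine (f x1))), x1, (fine (f x1)); rewrite fineK.
have Slb : has_lbound S.
  by exists 0 => r [x [s [_ ->]]]; rewrite /D addr_ge0 ?sqr_ge0.
pose d := inf S.
have dle : forall x s, (f x <= s%:E)%E -> d <= D x s.
  by move=> x s hxs; apply: ge_inf => //; exists x, s.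
have : forall n : nat, exists e : H * R, (f e.1 <= e.2%:E)%E /\ D e.1 e.2 < d + n.+1%:R^-1.
  move=> n; have hn0 : 0 < n.+1%:R^-1 :> R by rewrite invr_gt0 ltr0n.
  have [r [x [s [hxs ->]]] hr] := @inf_adherent _ S _ hn0 (conj S0 Slb).
  by exists (x, s).
move=> /choice [e he].
pose xs n := (e n).1; pose ss n := (e n).2.
have hxs n : (f (xs n) <= (ss n)%:E)%E := (he n).1.
have hD n : D (xs n) (ss n) < d + n.+1%:R^-1 := (he n).2.
have h2 : 0 < (2^-1 : R) < 1.
  by apply/andP; split; [rewrite invr_gt0 ltr0n | rewrite invf_lt1 ?ltr1n ?ltr0n].
have e1 : (1 - 2^-1 : R) = 2^-1 by field.
have cauchyb n m : `|xs n - xs m| ^+ 2 + (ss n - ss m) ^+ 2 <= 2 * n.+1%:R^-1 + 2 * m.+1%:R^-1.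
  have mid : (f (2^-1 *: xs n + (1 - 2^-1) *: xs m)%R <= ((2^-1 * ss n + (1 - 2^-1) * ss m)%R)%:E)%E.
    apply: le_trans (fconv _ _ _ h2) _.
    rewrite e1 EFinD !EFinM; apply: leeD; apply: lee_wpmul2l; rewrite ?lee_fin ?invr_ge0 ?ler0n ?hxs //.
  have hd := dle _ _ mid; rewrite e1 /D -mid_id in hd.
  have hn := hD n; have hm := hD m; rewrite /D in hn hm.
  have e3 : (x0 - xs m) - (x0 - xs n) = xs n - xs m by rewrite opprB addrC addrA subrK.
  have P := parallelogram (x0 - xs m) (x0 - xs n).
  rewrite e3 [_ *: (x0 - xs m) + _]addrC in P.
  have e4 : 2^-1 * ss n + 2^-1 * ss m - al = 2^-1 * (ss n - al) + 2^-1 * (ss m - al) by field.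
  rewrite e4 in hd.
  have -> : ss n - ss m = (ss n - al) - (ss m - al) by rewrite opprB addrA subrK.
  move: (ss n - al) (ss m - al) hd hn hm => p q hd hn hm.
  have sq : (p - q) ^+ 2 = 2 * p ^+ 2 + 2 * q ^+ 2 - 4 * (2^-1 * p + 2^-1 * q) ^+ 2 by field.
  rewrite P sq.
  move: hd hn hm; move: (n.+1%:R^-1) (m.+1%:R^-1) ((2^-1 * p + 2^-1 * q) ^+ 2) => a b w.
  move: (`|x0 - xs n| ^+ 2) (`|x0 - xs m| ^+ 2) (`|2^-1 *: (x0 - xs n) + 2^-1 *: (x0 - xs m)| ^+ 2) => A B M.
  lra.
have cx : cvg (xs @ \oo).
  apply: cauchy_seq_cvg => n m; have := cauchyb n m.
  have := sqr_ge0 (ss n - ss m); move: (2 / _ + _) => r; lra.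
have cs : cvg (ss @ \oo).
  apply: cauchy_seq_cvg => n m; have := cauchyb n m.
  rewrite real_normK ?num_real //.
  have := sqr_ge0 `|xs n - xs m|; move: (2 / _ + _) => r; lra.
set xq := lim (xs @ \oo).
set sq := lim (ss @ \oo).
exists xq, sq.
have epi_q : (f xq <= sq%:E)%E.
  rewrite leNgt; apply/negP => hlt.
  have [a [ha1 ha2]] : exists a : R, sq < a /\ (a%:E < f xq)%E.
    case fq: (f xq) hlt => [r| |] // hlt.
    - exists ((sq + r) / 2); rewrite lte_fin in hlt; split; rewrite ?lte_fin; lra.
    - exists (sq + 1); split; [lra | exact: ltry].
  have [V hV hVa] := flsc xq a ha2.
  have [N1 _ hN1] := cx V hV.
  have as0 : 0 < a - sq by lra.
  have [N2 _ hN2] := cvgr_dist_lt _ _ cs _ as0.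
  pose n := maxn N1 N2.
  have h1 := hVa _ (hN1 n (leq_maxl _ _)).
  have h3 := hN2 n (leq_maxr _ _).
  have h4 := lt_le_trans h1 (hxs n).
  rewrite lte_fin in h4; move: h3; rewrite -/sq ltr_norml; lra.
have c1 : (fun n => `|x0 - xs n|) @ \oo --> `|x0 - xq|.
  apply: cvg_norm; apply: cvgB; [exact: cvg_cst | exact: cx].
have c2 : (fun n => ss n - al) @ \oo --> sq - al.
  apply: cvgB; [exact: cs | exact: cvg_cst].
have hlim : (fun n => D (xs n) (ss n)) @ \oo --> D xq sq.
  exact: cvgD (cvgM c1 c1) (cvgM c2 c2).
have Dq : D xq sq <= d.
  have ub : forall eps, 0 < eps -> D xq sq <= d + eps.
    move=> eps eps0; rewrite -(norm_cvg_lim hlim).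
    apply: limr_le; first by apply/cvg_ex; exists (D xq sq).
    have [N hN] := natSinv_small eps0.
    exists N => // n /= hn; apply: ltW; apply: lt_le_trans (hD n) _; rewrite lerD2l; exact: ltW (hN n hn).
  rewrite leNgt; apply/negP => hlt.
  have h0 : 0 < (D xq sq - d) / 2 by rewrite divr_gt0 // subr_gt0.
  have := ub _ h0; move: hlt; move: (D xq sq) => z; lra.
split => // x s hxs'.
suff : ip (x0 - xq) (x - xq) - (sq - al) * (s - sq) <= 0 by lra.
apply: (@small_le _ _ (`|x - xq| ^+ 2 + (s - sq) ^+ 2)); first by rewrite addr_ge0 ?sqr_ge0.
move=> t t01; have /andP[t0 t1] := t01.
have ht : (f (t *: x + (1 - t) *: xq)%R <= ((t * s + (1 - t) * sq)%R)%:E)%E.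
  apply: le_trans; first exact: fconv.
  rewrite (EFinD (t * s)) !EFinM; apply: leeD; apply: lee_wpmul2l => //;
    by rewrite lee_fin ?subr_ge0 ltW.
have := dle _ _ ht; rewrite /D seg_id (normB2 hip) normrZ (ipZr hip) exprMn ger0_norm ?(ltW t0) //.
move: Dq; rewrite /D.
have -> : t * s + (1 - t) * sq - al = (sq - al) + t * (s - sq) by ring.
move: (ip (x0 - xq) (x - xq)) (`|x0 - xq|) (`|x - xq|) (sq - al) (s - sq) => I a b c g.
nra.
Qed.


Arguments proj {f}.

Lemma proj_minorant (f : H -> \bar R) x0 al xq sq :
  (forall x, f x != -oo)%E ->
  (forall x s, (f x <= s%:E)%E -> ip (x0 - xq) (x - xq) <= (sq - al) * (s - sq)) ->
  0 < sq - al ->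
  exists u (b : R), (forall x, ((ip x u + b)%:E <= f x)%E) /\ al < ip x0 u + b.
Proof.
move=> fN var c0.
move: var c0; set c := sq - al => var c0.
have ci0 : 0 < c^-1 by rewrite invr_gt0.
have key y : ip y (c^-1 *: (x0 - xq)) + (sq - ip xq (c^-1 *: (x0 - xq))) = c^-1 * ip (x0 - xq) (y - xq) + sq.
  rewrite (ipC hip (x0 - xq)) -(ipZr hip) (ipBl hip); ring.
exists (c^-1 *: (x0 - xq)), (sq - ip xq (c^-1 *: (x0 - xq))); split.
- move=> x; case fx: (f x) (fN x) => [r| |] // _; last exact: leey.
  have := var x r; rewrite fx lee_fin lexx => /(_ isT) h.
  rewrite lee_fin key.
  have := ler_wpM2l (ltW ci0) h; rewrite mulrA mulVf ?gt_eqF // mul1r; lra.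
- rewrite key (ipxx hip).
  have : 0 <= c^-1 * `|x0 - xq| ^+ 2 by rewrite mulr_ge0 ?sqr_ge0 // ltW.
  rewrite /c in c0; lra.
Qed.

Arguments proj_minorant {f x0 al xq sq}.

Lemma FM_fin (f : H -> \bar R) : Gamma0 f -> forall x0 (al : R),
  (al%:E < f x0)%E -> f x0 \is a fin_num ->
  exists u (b : R), (forall x, ((ip x u + b)%:E <= f x)%E) /\ al < ip x0 u + b.
Proof.
move=> gf x0 al hal hfin; have [[fN _] _ _] := gf.
have [xq [sq [epi var]]] := proj gf x0 al.
apply: (proj_minorant fN var).
have c0 : 0 <= sq - al.
  have e : sq + 1 - sq = 1 by ring.
  have := var xq (sq + 1); rewrite subrr (ip0r hip) e mulr1.
  by apply; apply: le_trans epi _; rewrite lee_fin lerDl.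
rewrite lt_def c0 andbT; apply/eqP => c00.
have := var x0 (fine (f x0)); rewrite fineK // lexx => /(_ isT).
rewrite c00 mul0r (ipxx hip) => hv.
have v0 : x0 = xq.
  by apply/eqP; rewrite -subr_eq0 -normr_eq0 -sqrf_eq0 eq_le hv sqr_ge0.
have hle : (f xq <= al%:E)%E by apply: le_trans epi _; rewrite lee_fin; lra.
by move: hle; rewrite -v0 leNgt hal.
Qed.

Lemma FMthm (f : H -> \bar R) : Gamma0 f -> forall x0 (al : R),
  (al%:E < f x0)%E ->
  exists u (b : R), (forall x, ((ip x u + b)%:E <= f x)%E) /\ al < ip x0 u + b.
Proof.
move=> gf x0 al hal; have [[fN [x1 fx1]] _ _] := gf.
case fx0: (f x0) hal (fN x0) => [r| |] // hal _.
  by apply: FM_fin => //; rewrite fx0.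
have [xq [sq [epi var]]] := proj gf x0 al.
have c0 : 0 <= sq - al.
  have e : sq + 1 - sq = 1 by ring.
  have := var xq (sq + 1); rewrite subrr (ip0r hip) e mulr1.
  by apply; apply: le_trans epi _; rewrite lee_fin lerDl.
move: c0; rewrite le_eqVlt => /orP[/eqP c00|cpos]; last exact: proj_minorant fN var cpos.
have [u1 [b1 [hmin _]]] : exists u (b : R), (forall x, ((ip x u + b)%:E <= f x)%E) /\ (fine (f x1) - 1) < ip x1 u + b.
  apply: FM_fin => //; rewrite -{2}(fineK fx1) lte_fin; lra.
set v := x0 - xq.
have vpos : 0 < `|v| ^+ 2.
  apply: exprn_gt0; rewrite normr_gt0 /v subr_eq0; apply/eqP => e.
  by move: epi; rewrite -e fx0.
have dom x r : f x = r%:E -> ip v (x - xq) <= 0.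
  by move=> fx; have := var x r; rewrite fx lexx -c00 mul0r => /(_ isT).
pose lam := (`|al - ip x0 u1 - b1| + 1) / `|v| ^+ 2.
have lam0 : 0 <= lam by rewrite /lam divr_ge0 // ?addr_ge0 // ltW.
exists (u1 + lam *: v), (b1 - lam * ip xq v); split.
- move=> x; case fx: (f x) (fN x) => [r| |] // _; last exact: leey.
  have := hmin x; rewrite fx lee_fin => h1.
  have h2 := dom x r fx.
  rewrite lee_fin (ipDr hip) (ipZr hip).
  have h3 := mulr_ge0_le0 lam0 h2.
  rewrite (ipC hip v) (ipBl hip) mulrBr in h3; lra.
- rewrite (ipDr hip) (ipZr hip).
  have e : lam * ip x0 v - lam * ip xq v = `|al - ip x0 u1 - b1| + 1.
    by rewrite -mulrBr -(ipBl hip) -/v (ipxx hip) /lam divfK // gt_eqF.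
  have := ler_norm (al - ip x0 u1 - b1); lra.
Qed.

End Proj.

Section Conj.
Variables (R : realType) (H : completeNormedModType R) (ip : H -> H -> R).
Hypothesis hip : is_inner_product ip.
Local Open Scope ereal_scope.

Lemma FY (f : H -> \bar R) x u : (ip x u)%:E - f x <= fconj ip f u.
Proof. by apply: ereal_sup_ubound; exists x. Qed.

Lemma fconj_le (f : H -> \bar R) u b :
  (forall x, (ip x u)%:E - f x <= b) -> fconj ip f u <= b.
Proof. by move=> h; apply/ereal_supP => _ [x _ <-]; apply: h. Qed.

Lemma fconj_neqNy (f : H -> \bar R) u : proper_fun f -> fconj ip f u != -oo.
Proof.
case=> _ [x1 fx1]; rewrite -ltNye; apply: lt_le_trans (FY f x1 u).
by rewrite -(fineK fx1) -EFinB ltNyr.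
Qed.

Lemma fconj_affine (f : H -> \bar R) u (b : R) :
  (forall x, ((ip x u) + b)%:E <= f x) -> fconj ip f u <= (- b)%:E.
Proof.
move=> h; apply: fconj_le => x; have := h x.
case: (f x) => [r| |] //.
- rewrite -EFinB !lee_fin => hr; lra.
- move=> *; exact: leNye.
Qed.

Lemma fconj_convex (f : H -> \bar R) : proper_fun f -> convex_fun (fconj ip f).
Proof.
move=> pf u v t /andP[t0 t1].
have t1' : (0 < 1 - t)%R by rewrite subr_gt0.
case Fu: (fconj ip f u) (fconj_neqNy _ u pf) => [a| |] // _;
case Fv: (fconj ip f v) (fconj_neqNy _ v pf) => [b| |] // _.
- rewrite -!EFinM -EFinD; apply: fconj_le => x.
  have := FY f x u; have := FY f x v; rewrite Fu Fv.
  case: (f x) (pf.1 x) => [r| |] // _.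
  + rewrite -!EFinB !lee_fin => hv hu.
    rewrite (ipDr hip) !(ipZr hip).
    have hu' := ler_wpM2l (ltW t0) hu.
    have hv' := ler_wpM2l (ltW t1') hv.
    nra.
  + move=> *; exact: leNye.
- by rewrite gt0_muley ?lte_fin // addey // leey.
- by rewrite gt0_muley ?lte_fin // addye // leey.
- by rewrite !gt0_muley ?lte_fin //; exact: leey.
Qed.

Lemma fconj_lsc (f : H -> \bar R) : proper_fun f -> lower_semicontinuous (fconj ip f).
Proof.
move=> pf u0 a /ereal_sup_gtP [_ [x _ <-]].
case fx: (f x) (pf.1 x) => [r| |] //= _.
rewrite -EFinB lte_fin => ha.
pose e := (ip x u0 - r - a)%R.
have e0 : (0 < e)%R by rewrite /e; lra.
have n0 : (0 < `|x| + 1)%R by rewrite ltr_wpDl.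
exists (ball u0 (e / (`|x| + 1))%R); first by apply: nbhsx_ballx; rewrite divr_gt0.
move=> u; rewrite -ball_normE /= distrC ltr_pdivlMr // => hu.
apply: lt_le_trans (FY f x u); rewrite fx -EFinB lte_fin.
have h1 := CS hip x (u - u0)%R.
have hd : (0 <= `|u - u0|)%R by [].
have h2 : (`|x| * `|u - u0| < e)%R by nra.
have := le_lt_trans h1 h2; rewrite ltr_norml (ipBr hip) => /andP[h3 _].
rewrite /e in h3; lra.
Qed.

Hypothesis FM : forall f : H -> \bar R, Gamma0 f -> forall x0 (al : R),
  al%:E < f x0 -> exists u (b : R),
    (forall x, (ip x u + b)%:E <= f x) /\ (al < ip x0 u + b)%R.

Lemma fconj_Gamma0 (f : H -> \bar R) : Gamma0 f -> Gamma0 (fconj ip f).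
Proof.
move=> gf; case: (gf) => pf _ _; split; last first.
- exact: fconj_lsc.
- exact: fconj_convex.
split; first by move=> u; exact: fconj_neqNy.
case: (pf) => _ [x1 fx1].
have : ((fine (f x1) - 1)%:E < f x1).
  by rewrite -{2}(fineK fx1) lte_fin; lra.
move=> /(FM _ gf) [u [b [hmin _]]]; exists u.
rewrite fin_numE fconj_neqNy //= -ltey.
exact: le_lt_trans (fconj_affine _ _ _ hmin) (ltry _).
Qed.

Lemma biconj (f : H -> \bar R) : Gamma0 f -> forall x, fconj ip (fconj ip f) x = f x.
Proof.
move=> gf x; case: (gf) => pf _ _.
have gc := fconj_Gamma0 _ gf; case: (gc) => pc _ _.
apply/eqP; rewrite eq_le; apply/andP; split.
- apply: fconj_le => u. have := FY f x u.
  case: (f x) (pf.1 x) => [r| |] // _; last by rewrite leey.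
  case: (fconj ip f u) => [s| |] //=.
  + rewrite -!EFinB !lee_fin (ipC hip u x); lra.
  + by rewrite leNye.
- rewrite leNgt; apply/negP => lt.
  case E: (fconj ip (fconj ip f) x) lt (fconj_neqNy _ x pc) => [s| |] // lt _.
  have [u [b [hmin hb]]] := FM _ gf _ _ lt.
  have := FY (fconj ip f) u x; rewrite E.
  have := fconj_affine _ _ _ hmin.
  case: (fconj ip f u) (fconj_neqNy _ u pf) => [c| |] // _.
  + rewrite -EFinB !lee_fin (ipC hip u x); lra.
  + by move: lt; rewrite ltNge leey.
Qed.

Lemma subdiffE (g : H -> \bar R) x z : proper_fun g ->
  subdiff ip g x z <-> (g x \is a fin_num /\ fconj ip g z <= (ip x z)%:E - g x).
Proof.
move=> [gN [y1 gy1]]; split.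
- move=> h.
  case gxE: (g x) (gN x) => [r| |] // _.
  + split => //; apply: fconj_le => y; have := h y; rewrite gxE.
    case: (g y) (gN y) => [s| |] // _.
    * rewrite -EFinD -!EFinB !lee_fin (ipBl hip); lra.
    * move=> *; exact: leNye.
  + have := h y1; rewrite gxE; move: gy1.
    by case: (g y1).
- move=> [gx hc] y; case gxE: (g x) gx hc => [r| |] // _ hc.
  have := le_trans (FY g y z) hc.
  case: (g y) (gN y) => [s| |] // _.
  + rewrite -!EFinB -EFinD !lee_fin (ipBl hip); lra.
  + move=> *; exact: leey.
Qed.

Lemma subdiff_conj (f : H -> \bar R) x y : Gamma0 f ->
  subdiff ip f y x <-> subdiff ip (fconj ip f) x y.
Proof.
move=> gf; case: (gf) => pf _ _.
have gc := fconj_Gamma0 _ gf; case: (gc) => pc _ _.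
split.
- move=> /(subdiffE _ _ _ pf) [fy h]; apply/(subdiffE _ _ _ pc); rewrite biconj //.
  move: fy h; case: (f y) => [r| |] // _.
  case: (fconj ip f x) (fconj_neqNy _ x pf) => [s| |] // _.
  rewrite -!EFinB !lee_fin (ipC hip x y) => h; split => //; lra.
- move=> /(subdiffE _ _ _ pc) [fc h]; apply/(subdiffE _ _ _ pf).
  move: h; rewrite biconj //; move: fc.
  case: (fconj ip f x) => [s| |] // _.
  case: (f y) (pf.1 y) => [r| |] // _.
  rewrite -!EFinB !lee_fin (ipC hip x y) => h; split => //; lra.
Qed.

Lemma prox_subdiff (phi : H -> \bar R) x y : (forall z, phi z != -oo) ->
  Prox phi x y <-> subdiff ip (fun z => phi z + halfsq z) y x.
Proof.
move=> hN; rewrite /Prox /subdiff /halfsq; split => h z; have := h z;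
case: (phi y) (hN y) => [a| |] // _; case: (phi z) (hN z) => [b| |] // _.
- rewrite -!EFinD !lee_fin !(normB2 hip) (ipBl hip) (ipC hip x y) (ipC hip x z); lra.
all: try (move=> *; exact: leey).
all: try by rewrite ?addye ?addey // -?EFinD leye_eq.
rewrite -!EFinD !lee_fin !(normB2 hip) (ipBl hip) (ipC hip x y) (ipC hip x z); lra.
Qed.


Lemma main_conj (T : H -> set H) :
  [/\ (exists psi : H -> \bar R, Gamma0 psi /\ T = subdiff ip psi) <->
      (exists phi : H -> \bar R, (forall x, phi x != -oo)%E /\
          Gamma0 (fun x => phi x + halfsq x)%E /\ T = Prox phi),
      (forall psi : H -> \bar R, Gamma0 psi -> T = subdiff ip psi ->
         let phi := (fun x => fconj ip psi x - halfsq x)%E in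
         [/\ (forall x, phi x != -oo)%E,
             Gamma0 (fun x => phi x + halfsq x)%E & T = Prox phi])
    & (forall phi : H -> \bar R, (forall x, phi x != -oo)%E ->
         Gamma0 (fun x => phi x + halfsq x)%E -> T = Prox phi ->
         let psi := fconj ip (fun x => phi x + halfsq x)%E in
         Gamma0 psi /\ T = subdiff ip psi)].
Proof.
have part2 : forall psi : H -> \bar R, Gamma0 psi -> T = subdiff ip psi ->
         let phi := (fun x => fconj ip psi x - halfsq x)%E in
         [/\ (forall x, phi x != -oo)%E,
             Gamma0 (fun x => phi x + halfsq x)%E & T = Prox phi].
  move=> psi gpsi hT phi.
  have [ppsi _ _] := gpsi.
  have e : (fun x => phi x + halfsq x) = fconj ip psi.
    apply/funext => x; rewrite /phi /halfsq.
    case: (fconj ip psi x) (fconj_neqNy _ x ppsi) => [r| |] // _.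
    by rewrite -EFinB -EFinD subrK.
  have phiN : forall x, phi x != -oo.
    move=> x; rewrite /phi /halfsq.
    by case: (fconj ip psi x) (fconj_neqNy _ x ppsi) => [r| |].
  split => //.
  - rewrite e; exact: fconj_Gamma0 _ gpsi.
  - rewrite hT; apply/funext => x; apply/seteqP; split => y /=.
    + move=> hy; apply/(prox_subdiff _ _ _ phiN); rewrite e.
      by apply/(subdiff_conj _ _ _ gpsi).
    + move=> /(prox_subdiff _ _ _ phiN); rewrite e => /(subdiff_conj _ _ _ gpsi).
      done.
have part3 : forall phi : H -> \bar R, (forall x, phi x != -oo)%E ->
         Gamma0 (fun x => phi x + halfsq x)%E -> T = Prox phi ->
         let psi := fconj ip (fun x => phi x + halfsq x)%E in
         Gamma0 psi /\ T = subdiff ip psi.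
  move=> phi phiN gf hT psi; split; first exact: fconj_Gamma0 _ gf.
  rewrite hT; apply/funext => x; apply/seteqP; split => y /=.
  + move=> /(prox_subdiff _ _ _ phiN) => /(subdiff_conj _ _ _ gf); done.
  + move=> hy; apply/(prox_subdiff _ _ _ phiN); apply/(subdiff_conj _ _ _ gf); done.
split => //; split.
- move=> [psi [gpsi hT]]; have [h1 h2 h3] := part2 psi gpsi hT.
  by exists (fun x => fconj ip psi x - halfsq x).
- move=> [phi [phiN [gf hT]]]; have [h1 h2] := part3 phi phiN gf hT.
  by exists (fconj ip (fun x => phi x + halfsq x)).
Qed.

End Conj.

Theorem proposition1 (R : realType) (H : completeNormedModType R)
    (ip : H -> H -> R) (hip : is_inner_product ip) (T : H -> set H) :
  [/\ (exists psi : H -> \bar R, Gamma0 psi /\ T = subdiff ip psi) <->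
      (exists phi : H -> \bar R, (forall x, phi x != -oo)%E /\
          Gamma0 (fun x => phi x + halfsq x)%E /\ T = Prox phi),
      (forall psi : H -> \bar R, Gamma0 psi -> T = subdiff ip psi ->
         let phi := (fun x => fconj ip psi x - halfsq x)%E in
         [/\ (forall x, phi x != -oo)%E,
             Gamma0 (fun x => phi x + halfsq x)%E & T = Prox phi])
    & (forall phi : H -> \bar R, (forall x, phi x != -oo)%E ->
         Gamma0 (fun x => phi x + halfsq x)%E -> T = Prox phi ->
         let psi := fconj ip (fun x => phi x + halfsq x)%E in
         Gamma0 psi /\ T = subdiff ip psi)].
Proof.
exact: (@main_conj R H ip hip (@FMthm R H ip hip) T).
Qed.
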